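(* Let $Fa$ and $Fb$ be two distinct points of $\mathrm{PG}(n-1,q)$ ($a,b\in L^*$), and let $\ell$ be the line joining them. Put $m=[F(ab^{-1}):F]$, the degree of the field extension of $F$ generated by $ab^{-1}$. Then $j(\ell)$ is the image of an $(m-1)$-uple embedding.
   Context: Let $q$ be a prime power, $F=\mathbb F_q$, $n\ge 2$ an integer, and $L=\mathbb F_{q^n}\supseteq F$. Regard $L$ as an $n$-dimensional $F$-vector space; $\mathrm{PG}(n-1,q)$ denotes the projective space whose points are the one-dimensional $F$-subspaces $Fx$, $x\in L^*$, and whose lines are the two-dimensional $F$-subspaces (identified with their sets of points). Define $j:\mathrm{PG}(n-1,q)\to\mathrm{PG}(n-1,q)$ by $j(Fx)=Fx^{-1}$. For an integer $r\ge1$, a set $X$ of points of a projective space $\mathrm{PG}(V)$ over $F$ is called the image of an $r$-uple embedding if there is an injective $F$-linear map $\phi:F^{r+1}\to V$ such that $X=\{F\,\phi(t_0^r,t_0^{r-1}t_1,\dots,t_0t_1^{r-1},t_1^r):(t_0,t_1)\in F^2\setminus\{(0,0)\}\}$. *)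

(* Defs.v *)
From HB Require Import structures.
From mathcomp Require Import all_boot all_order all_algebra all_field.
Set Implicit Arguments. Unset Strict Implicit. Unset Printing Implicit Defensive.
Import GRing.Theory.
Local Open Scope ring_scope.

(* Setting: F = F_q a finite field, L a field extension of F of degree n
   (hence L = F_{q^n}).  Points of PG(n-1,q) are 1-dimensional F-subspaces
   of L; sets of points are predicates on {vspace L}. *)

Section PG.
Variables (F : finFieldType) (L : fieldExtType F).

Definition is_point (U : {vspace L}) : Prop := \dim U = 1%N.

(* j(Fx) = F x^{-1}; on a point U = Fx we take the generator vpick U
   (any nonzero element of U), which gives the same subspace. *)
Definition jmap (U : {vspace L}) : {vspace L} := <[(vpick U)^-1]>%VS.

Definition line_join (a b : L) : {vspace L} := (<[a]> + <[b]>)%VS.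

Definition jimage (l : {vspace L}) (P : {vspace L}) : Prop :=
  exists2 Q : {vspace L}, is_point Q /\ (Q <= l)%VS & P = jmap Q.

Definition veronese_vec (r : nat) (t0 t1 : F) : 'rV[F]_(r.+1) :=
  \row_(i < r.+1) (t0 ^+ (r - i) * t1 ^+ i).

Definition r_uple_image (r : nat) (X : {vspace L} -> Prop) : Prop :=
  exists phi : {linear 'rV[F]_(r.+1) -> L},
    injective phi /\
    forall P : {vspace L},
      X P <-> exists t0 t1 : F, (t0, t1) != (0, 0) /\
                                 P = <[phi (veronese_vec r t0 t1)]>%VS.
End PG.

(* Main.v *)
Require Import Defs.
From HB Require Import structures.
From mathcomp Require Import all_boot all_order all_algebra all_field.
From mathcomp Require Import ring zify.
Import GRing.Theory.
Set Implicit Arguments. Unset Strict Implicit. Unset Printing Implicit Defensive.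
Local Open Scope ring_scope.

Definition lcomb (F : finFieldType) (L : fieldExtType F) k (w : 'I_k -> L)
  (x : 'rV[F]_k) : L := \sum_i x 0 i *: w i.

Fact lcomb_lin (F : finFieldType) (L : fieldExtType F) k (w : 'I_k -> L) :
  linear (lcomb w).
Proof.
move=> s x y; rewrite /lcomb scaler_sumr -big_split; apply: eq_bigr => i _.
by rewrite !mxE scalerDl scalerA.
Qed.

HB.instance Definition _ (F : finFieldType) (L : fieldExtType F) k (w : 'I_k -> L) :=
  GRing.isLinear.Build _ _ _ _ (lcomb w) (lcomb_lin w).

Section Aux.
Variables (F : finFieldType) (L : fieldExtType F) (c : L).

Let m := \dim <<1%VS; c>>.
Let f := minPoly 1 c.
Definition dd i := (Poly (drop i f)).[c].

Lemma size_f : size f = m.+1.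
Proof. by rewrite size_minPoly adjoin_degreeE dimv1 divn1. Qed.

Lemma dd_rec i : dd i = f`_i + c * dd i.+1.
Proof.
rewrite /dd; case: (ltnP i (size f)) => hi.
  rewrite (drop_nth 0 hi) /=. idtac.
  by rewrite cons_poly_def hornerD hornerMX hornerC mulrC addrC.
by rewrite !drop_oversize ?(leq_trans hi) // nth_default // horner0 mulr0 addr0.
Qed.

Lemma dd0 : dd 0 = 0.
Proof. by rewrite /dd drop0 polyseqK; apply/rootP/root_minPoly. Qed.

Lemma ddm1 : dd m.+1 = 0.
Proof. by rewrite /dd drop_oversize ?size_f // horner0. Qed.

Lemma f_in1 i : f`_i \in 1%VS.
Proof. exact: (polyOverP (minPolyOver 1 c)). Qed.

Lemma f_m : f`_m = 1.
Proof.
have := monicP (monic_minPoly 1 c); rewrite /lead_coef -/f size_f /=.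
done.
Qed.

Lemma sum_ident r (T0 T1 : L) : m = r.+1 ->
  (T0 * c + T1) * \sum_(i < r.+1) T0 ^+ (r - i) * T1 ^+ i * ((-1) ^+ i * dd i.+1)
  = - \sum_(i < r.+1) (-1) ^+ i * T0 ^+ (r.+1 - i) * T1 ^+ i * f`_i
    - (-1) ^+ r.+1 * T1 ^+ r.+1 * dd r.+1.
Proof.
move=> hm.
pose g k := (-1) ^+ k * T0 ^+ (r.+1 - k) * T1 ^+ k * dd k.
transitivity (\sum_(i < r.+1) (g i - g i.+1)
   - \sum_(i < r.+1) (-1) ^+ i * T0 ^+ (r.+1 - i) * T1 ^+ i * f`_i).
  rewrite -sumrB mulr_sumr; apply: eq_bigr => i _.
  have hi := ltn_ord i.
  rewrite /g subSS; have -> : (r.+1 - i = (r - i).+1)%N by lia.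
  rewrite /g (dd_rec i) !exprS; ring.
have -> : \sum_(i < r.+1) (g i - g i.+1) = - \sum_(0 <= i < r.+1) (g i.+1 - g i).
  by rewrite big_mkord -sumrN; apply: eq_bigr => i _; rewrite opprB.
rewrite telescope_sumr // /g dd0 subnn expr0 !mulr0 subr0 mulr1.
by rewrite addrC.
Qed.

Lemma indep r (y : 'I_r.+1 -> L) : m = r.+1 -> (forall i, y i \in 1%VS) ->
  \sum_(i < r.+1) y i * ((-1) ^+ i * dd i.+1) = 0 -> forall i, y i = 0.
Proof.
move=> hm y1 hs.
pose P := \sum_(i < r.+1) (y i * (-1) ^+ i) *: Poly (drop i.+1 f).
have coefP k : P`_k = \sum_(i < r.+1) y i * (-1) ^+ i * f`_(i.+1 + k).
  by rewrite /P coef_sum; apply: eq_bigr => i _; rewrite coefZ coef_Poly nth_drop.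
have P0 : P = 0.
  apply/eqP; apply: contraT => nz.
  have Pov : P \is a polyOver 1%VS.
    apply/polyOverP => k; rewrite coefP; apply: rpred_sum => i _.
    apply: rpredM; last exact: f_in1.
    by apply: rpredM; [exact: y1 | apply: rpredX; rewrite rpredN; exact: mem1v].
  have hr : root P c.
    apply/rootP; rewrite /P horner_sum; etransitivity; last exact: hs; apply: eq_bigr => i _.
    by rewrite hornerZ mulrA.
  have := dvdp_leq nz (minPoly_dvdp Pov hr); rewrite size_f.
  have : (size P <= m)%N.
    apply/leq_sizeP => j hj; rewrite coefP big1 // => i _.
    by rewrite nth_default ?mulr0 // size_f; lia.
  by move=> h1 h2; have := leq_trans h2 h1; rewrite ltnn.
have key j : (j <= r.+1)%N -> forall i : 'I_r.+1, (i < j)%N -> y i = 0.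
  elim: j => [|j IH] hj i hi; first by [].
  case: (ltnP i j) => hij; first by apply: IH => //; lia.
  have := coefP (r - i)%N; rewrite P0 coef0 (bigD1 i) //= big1.
    rewrite addr0 (_ : (i.+1 + (r - i))%N = m) ?f_m; last by lia.
    move/esym/eqP; rewrite mulr1 mulf_eq0 signr_eq0 orbF => /eqP //.
  move=> k hk.
  have hne : (k : nat) <> i by move=> e; move/eqP: hk; apply; apply: val_inj.
  case: (ltnP k i) => hki.
    by rewrite IH ?mul0r //; lia.
  by rewrite nth_default ?mulr0 // size_f; lia.
by move=> i; apply: (key r.+1) => //.
Qed.
End Aux.

Lemma lineZ (F : finFieldType) (L : fieldExtType F) (k : F) (v : L) :
  k != 0 -> <[k *: v]>%VS = <[v]>%VS.
Proof.
move=> kn; apply/eqP; rewrite eqEdim -memvE memvZ ?memv_line //=.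
by rewrite !dim_vline scaler_eq0 (negbTE kn).
Qed.

Lemma invZ (F : finFieldType) (L : fieldExtType F) (k : F) (z : L) :
  k != 0 -> z != 0 -> (k *: z)^-1 = k^-1 *: z^-1.
Proof.
move=> kn zn; have kzn : k *: z != 0 by rewrite scaler_eq0 negb_or kn.
apply: (mulfI kzn); rewrite divff // -scalerAl -scalerAr scalerA.
by rewrite divff // divff // scale1r.
Qed.

Section Main.
Variables (F : finFieldType) (L : fieldExtType F) (a b : L).
Hypotheses (hb : b != 0).
Let c := a / b.
Hypothesis hc : c \notin 1%VS.
Variable r : nat.
Hypothesis hm : \dim <<1%VS; c>> = r.+1.

Definition ww (i : 'I_r.+1) : L := b^-1 * ((-1) ^+ i * dd c i.+1).

Lemma keyA (t0 t1 : F) : (t0, t1) != (0, 0) ->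
  t0 *: a + t1 *: b != 0 /\
  <[(t0 *: a + t1 *: b)^-1]>%VS = <[lcomb ww (veronese_vec r t0 t1)]>%VS.
Proof.
move=> h0; set z := t0 *: a + t1 *: b.
set T0 : L := t0%:A; set T1 : L := t1%:A.
have T0in : T0 \in 1%VS by rewrite /T0 memvZ ?mem1v.
have T1in : T1 \in 1%VS by rewrite /T1 memvZ ?mem1v.
have ez : z = b * (T0 * c + T1).
  rewrite /z /c -[t0 *: a]mulr_algl -[t1 *: b]mulr_algl -/T0 -/T1; field; exact: hb.
have he : T0 * c + T1 != 0.
  case: (eqVneq t0 0) => [t00 | t0n].
    have t1n : t1 != 0 by apply: contra h0 => /eqP ->; rewrite t00.
    by rewrite /T0 t00 scale0r mul0r add0r /T1 scaler_eq0 oner_eq0 orbF.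
  have T0n : T0 != 0 by rewrite /T0 scaler_eq0 oner_eq0 orbF.
  apply: contra hc => /eqP e.
  have -> : c = - T1 / T0.
    apply: (mulfI T0n); rewrite [RHS]mulrCA divff // mulr1; apply/eqP; rewrite -subr_eq0 opprK; exact/eqP.
  by apply: rpredM; [rewrite rpredN | rewrite rpredV].
have zn : z != 0 by rewrite ez mulf_neq0 // invr_neq0.
split => //.
pose S := \sum_(i < r.+1) T0 ^+ (r - i) * T1 ^+ i * ((-1) ^+ i * dd c i.+1).
have hT (i : 'I_r.+1) : T0 ^+ (r - i) * T1 ^+ i = (t0 ^+ (r - i) * t1 ^+ i)%:A.
  by rewrite /T0 /T1 !exprZn !expr1n mulr_algl scalerA.
have ephi : lcomb ww (veronese_vec r t0 t1) = b^-1 * S.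
  rewrite /lcomb /S mulr_sumr; apply: eq_bigr => i _.
  by rewrite mxE -mulr_algl -hT /ww; ring.
have Sn : S != 0.
  apply/eqP => S0.
  have := @indep F L c r (fun i => T0 ^+ (r - i) * T1 ^+ i) hm.
  move=> /(_ _ S0) hy.
  have yin (i : 'I_r.+1) : T0 ^+ (r - i) * T1 ^+ i \in 1%VS.
    by apply: rpredM; apply: rpredX.
  have {}hy := hy yin.
  case: (eqVneq t0 0) => [t00 | t0n].
    have t1n : t1 != 0 by apply: contra h0 => /eqP ->; rewrite t00.
    have := hy ord_max; rewrite /= subnn expr0 mul1r => /eqP.
    by rewrite expf_eq0 /T1 scaler_eq0 oner_eq0 orbF (negbTE t1n) andbF.
  have := hy ord0; rewrite /= subn0 expr0 mulr1 => /eqP.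
  by rewrite expf_eq0 /T0 scaler_eq0 oner_eq0 orbF (negbTE t0n) andbF.
have E1 : (T0 * c + T1) * S \in 1%VS.
  rewrite /S (sum_ident _ _ hm) (dd_rec c r.+1).
  have := ddm1 c; rewrite hm => ->; rewrite mulr0 addr0.
  apply: rpredB; last by apply: rpredM; [apply: rpredM; [apply: rpredX; rewrite rpredN; exact: mem1v | exact: rpredX] | exact: f_in1].
  rewrite rpredN; apply: rpred_sum => i _.
  apply: rpredM; last exact: f_in1.
  apply: rpredM; last exact: rpredX.
  by apply: rpredM; [apply: rpredX; rewrite rpredN; exact: mem1v | exact: rpredX].
case/vlineP: E1 => k hk.
have kn : k != 0.
  apply: contraNneq (mulf_neq0 he Sn) => k0; by rewrite hk k0 scale0r.
rewrite ephi; have -> : b^-1 * S = k *: z^-1.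
  rewrite -mulr_algl -hk ez; field; by rewrite he hb.
by rewrite lineZ.
Qed.
End Main.

Unset Implicit Arguments.

Theorem mainTheorem1 (F : finFieldType) (L : fieldExtType F) (n : nat)
  (hdim : \dim {:L} = n) (hn : (2 <= n)%N)
  (a b : L) (ha : a != 0) (hb : b != 0)
  (hab : <[a]>%VS != <[b]>%VS) :
  r_uple_image ((\dim <<1%VS; a / b>>%VS).-1)%N (jimage (line_join a b)).
Proof.
have hc : a / b \notin 1%VS.
  apply: contra hab => /vlineP [k hk].
  have kn : k != 0.
    apply: contraNneq ha => k0; by rewrite -(divfK hb a) hk k0 scale0r mul0r.
  have -> : a = k *: b by rewrite -mulr_algl -hk divfK.
  by rewrite lineZ.
have h1 : (0 < \dim <<1%VS; a / b>>)%N.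
  by have := dimvS (subv_adjoin 1%VS (a / b)); rewrite dimv1.
have hne : \dim <<1%VS; a / b>> != 1%N.
  have := adjoin_deg_eq1 1%AS (a / b).
  by rewrite adjoin_degreeE dimv1 divn1 (negbTE hc) => ->.
set r := (\dim <<1%VS; a / b>>).-1.
have hm : \dim <<1%VS; a / b>> = r.+1 by rewrite /r prednK.
exists (lcomb (ww a b (r:=r))); split.
  move=> x y exy; apply/eqP; rewrite -subr_eq0; apply/eqP.
  have h : lcomb (ww a b (r:=r)) (x - y) = 0 by rewrite linearB /= exy subrr.
  have hs : \sum_(i < r.+1) ((x - y) 0 i)%:A * ((-1) ^+ i * dd (a / b) i.+1) = 0.
    move: h; rewrite /lcomb.
    have -> : \sum_i (x - y) 0 i *: ww a b i
       = b^-1 * \sum_(i < r.+1) ((x - y) 0 i)%:A * ((-1) ^+ i * dd (a / b) i.+1).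
      rewrite mulr_sumr; apply: eq_bigr => i _.
      by rewrite /ww mulr_algl scalerAr.
    by move/eqP; rewrite mulf_eq0 invr_eq0 (negbTE hb) /= => /eqP.
  have yin (i : 'I_r.+1) : (((x - y) 0 i)%:A : L) \in 1%VS by apply: memvZ; exact: mem1v.
  have := indep hm yin hs => hy.
  apply/rowP => i; move/eqP: (hy i); rewrite scaler_eq0 oner_eq0 orbF => /eqP ->.
  by rewrite mxE.
move=> P; split.
  case=> Q [hQ hQl] ->; rewrite /jmap.
  set z := vpick Q.
  have zn : z != 0.
    rewrite vpick0; apply/eqP => Q0; move: hQ; rewrite /is_point Q0 dimv0.
    by [].
  have : z \in line_join a b by exact: (subvP hQl _ (memv_pick Q)).
  case/memv_addP => u /vlineP[k1 ->] [v /vlineP[k2 ->] ez].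
  have h0 : (k1, k2) != (0, 0).
    apply/negP => /eqP [e1 e2]; move: zn; rewrite ez e1 e2 !scale0r addr0 eqxx.
    by [].
  exists k1, k2; split => //.
  by rewrite ez; exact: (keyA hb hc hm h0).2.
case=> t0 [t1 [h0 ->]].
have [zn hz] := keyA hb hc hm h0.
exists <[t0 *: a + t1 *: b]>%VS.
  split; first by rewrite /is_point dim_vline zn.
  by rewrite -memvE; apply: memv_add; apply: memvZ; apply: memv_line.
rewrite /jmap.
have : vpick <[t0 *: a + t1 *: b]>%VS \in <[t0 *: a + t1 *: b]>%VS := memv_pick _.
case/vlineP => l hl.
have vpn : vpick <[t0 *: a + t1 *: b]>%VS != 0.
  by rewrite vpick0 -dimv_eq0 dim_vline zn.
have ln : l != 0.
  by apply: contraNneq vpn => l0; rewrite hl l0 scale0r.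
by rewrite hl invZ // lineZ ?invr_neq0 // -hz.
Qed.
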